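(* Let $G$ be any graph and let $vw$ be an edge of $G$ that belongs to two different bicliques of $G$. Then, after possibly interchanging the names of $v$ and $w$, at least one of the following holds: (a) there exist vertices $v_1,w_1$ such that $v v_1$ and $w w_1$ are edges, while $v w_1$, $w v_1$ and $v_1 w_1$ are non-edges; or (b) there exist vertices $v_1,v_2$ such that $v v_1$, $v v_2$ and $v_1v_2$ are edges, while $w v_1$ and $w v_2$ are non-edges.
   Context: All graphs are finite, simple and undirected. A biclique of a graph $G$ is a maximal (with respect to inclusion) induced subgraph of $G$ that is a complete bipartite graph $K_{p,q}$ with $p,q\ge 1$. *)

(* Defs.v *)
From mathcomp Require Import all_boot.
Set Implicit Arguments. Unset Strict Implicit. Unset Printing Implicit Defensive.

Definition simple_graph (T : finType) (e : rel T) : Prop :=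
  symmetric e /\ irreflexive e.

Definition induces_complete_bipartite (T : finType) (e : rel T) (B : {set T}) : Prop :=
  exists X Y : {set T},
    [/\ X :|: Y = B, [disjoint X & Y], X != set0, Y != set0 &
     [/\ forall x y, x \in X -> y \in Y -> e x y,
         forall x x', x \in X -> x' \in X -> ~~ e x x' &
         forall y y', y \in Y -> y' \in Y -> ~~ e y y']].

(* A biclique: an (inclusion-)maximal induced complete bipartite subgraph,
   identified with its vertex set. *)
Definition biclique (T : finType) (e : rel T) (B : {set T}) : Prop :=
  induces_complete_bipartite e B /\
  forall B' : {set T}, B \subset B' -> induces_complete_bipartite e B' -> B' = B.

Definition alt_a (T : finType) (e : rel T) (v w : T) : Prop :=
  exists v1 w1 : T,
    [/\ e v v1, e w w1, ~~ e v w1, ~~ e w v1 & ~~ e v1 w1].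

Definition alt_b (T : finType) (e : rel T) (v w : T) : Prop :=
  exists v1 v2 : T,
    [/\ e v v1, e v v2, e v1 v2, ~~ e w v1 & ~~ e w v2].

(* Main.v *)
Require Import Defs.
From mathcomp Require Import all_boot.
From Stdlib Require Import Classical.
Set Implicit Arguments. Unset Strict Implicit.

Definition SX (T : finType) (e : rel T) (v w : T) : {set T} :=
  [set x | e w x && ~~ e v x].

Lemma sub_S (T : finType) (e : rel T) (v w : T) (X Y : {set T}) :
  simple_graph e ->
  (forall x y, x \in X -> y \in Y -> e x y) ->
  (forall x x', x \in X -> x' \in X -> ~~ e x x') ->
  (forall y y', y \in Y -> y' \in Y -> ~~ e y y') ->
  v \in X -> w \in Y -> X :|: Y \subset SX e v w :|: SX e w v.
Proof.
move=> [sy _] H1 H2 H3 vX wY; apply/subsetP => x; rewrite !inE.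
case/orP=> xX.
- rewrite (H2 _ _ vX xX) -sy (H1 _ _ xX wY) //.
- by rewrite (H1 _ _ vX xX) (H3 _ _ wY xX) orbT.
Qed.

Lemma sub_B (T : finType) (e : rel T) (v w : T) (B : {set T}) :
  simple_graph e -> e v w -> biclique e B -> v \in B -> w \in B ->
  B \subset SX e v w :|: SX e w v.
Proof.
move=> G evw [[X [Y [eB dj _ _ [H1 H2 H3]]]] _] vB wB.
have [sy irr] := G.
rewrite -eB in vB wB *.
move: vB wB; rewrite !inE => /orP [vX|vY]; move/orP => [wX|wY].
- by move: (H2 _ _ vX wX); rewrite evw.
- exact: sub_S.
- by rewrite [SX e v w :|: _]setUC; apply: sub_S.
- by move: (H3 _ _ vY wY); rewrite evw.
Qed.

Lemma S_cb (T : finType) (e : rel T) (v w : T) :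
  simple_graph e -> e v w -> ~ alt_a e v w -> ~ alt_b e v w -> ~ alt_b e w v ->
  induces_complete_bipartite e (SX e v w :|: SX e w v).
Proof.
move=> [sy irr] evw Ha Hb Hb'.
exists (SX e v w), (SX e w v); split => //.
- apply/pred0P => x /=; rewrite /SX !inE.
  by case: (e w x); case: (e v x).
- apply/set0Pn; exists v; rewrite /SX inE -sy evw irr.
  done.
- apply/set0Pn; exists w; rewrite /SX inE evw irr.
  done.
split.
- move=> x y; rewrite /SX !inE => /andP [ewx nevx] /andP [evy newy].
  case Exy: (e x y) => //; exfalso; apply: Ha; exists y, x; split => //.
  by rewrite sy Exy.
- move=> x x'; rewrite /SX !inE => /andP [ewx nevx] /andP [ewx' nevx'].
  case Exy: (e x x') => //; exfalso; apply: Hb'; exists x, x'; split => //.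
- move=> x x'; rewrite /SX !inE => /andP [ewx nevx] /andP [ewx' nevx'].
  case Exy: (e x x') => //; exfalso; apply: Hb; exists x, x'; split => //.
Qed.

Theorem claim1 (T : finType) (e : rel T) (v w : T) (B1 B2 : {set T}) :
  simple_graph e -> e v w ->
  biclique e B1 -> biclique e B2 -> B1 != B2 ->
  v \in B1 -> w \in B1 -> v \in B2 -> w \in B2 ->
  (alt_a e v w \/ alt_b e v w) \/ (alt_a e w v \/ alt_b e w v).
Proof.
move=> G evw bB1 bB2 ne v1 w1 v2 w2.
destruct (classic (alt_a e v w)) as [A|A]; first by left; left.
destruct (classic (alt_b e v w)) as [B|B]; first by left; right.
destruct (classic (alt_b e w v)) as [C|C]; first by right; right.
exfalso.
have cb := S_cb G evw A B C.
have E1 := bB1.2 _ (sub_B G evw bB1 v1 w1) cb.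
have E2 := bB2.2 _ (sub_B G evw bB2 v2 w2) cb.
by move: ne; rewrite -E1 -E2 eqxx.
Qed.
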